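(* Let $G$ be a finite abelian group and let $f$ be an automorphism of $\mathcal{P}_{0}(G)$ with pullback $g$. If $H$ is a subgroup of $G$, then $f(H)=g[H]=\{g(h):h\in H\}$.
   Context: For an additively written finite abelian group $G$, $\mathcal{P}_{0}(G)$ is the monoid of all subsets of $G$ containing $0$, with setwise addition and identity $\{0\}$. Every automorphism $f$ of $\mathcal{P}_0(G)$ maps $2$-element sets to $2$-element sets; the pullback of $f$ is the bijection $g:G\to G$ defined by $g(0)=0$ and, for nonzero $a\in G$, by $f(\{0,a\})=\{0,g(a)\}$. *)

(* Defs.v *)
(* The finite abelian group G is a finGroupType gT with
   [abelian [set: gT]]; the group law (written multiplicatively in MathComp)
   plays the role of the paper's addition, 1 plays the role of 0, and the
   pointwise set product A * B on {set gT} is the setwise sum A + B. *)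
From mathcomp Require Import all_boot all_fingroup.
Set Implicit Arguments.
Unset Strict Implicit.
Unset Printing Implicit Defensive.
Local Open Scope group_scope.

Definition inP0 (gT : finGroupType) (A : {set gT}) : bool := 1 \in A.

(* f, viewed as a function on {set gT}, restricts to a monoid automorphism
   of P_0(G) (values outside P_0(G) are irrelevant). *)
Definition P0_automorphism (gT : finGroupType) (f : {set gT} -> {set gT}) : Prop :=
  [/\ (forall A, inP0 A -> inP0 (f A)),
      (forall A B, inP0 A -> inP0 B -> f A = f B -> A = B),
      (forall B, inP0 B -> exists2 A, inP0 A & f A = B),
      f [1] = [1] &
      (forall A B, inP0 A -> inP0 B -> f (A * B) = f A * f B)].

Definition is_pullback (gT : finGroupType) (f : {set gT} -> {set gT})
    (g : gT -> gT) : Prop :=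
  g 1 = 1 /\ (forall a : gT, a != 1 -> f [set 1; a] = [set 1; g a]).

(* Main.v *)
Require Import Defs.
From mathcomp Require Import all_boot all_fingroup.
Local Open Scope group_scope.

Theorem lemma2p4 (gT : finGroupType) (f : {set gT} -> {set gT}) (g : gT -> gT)
  (H : {group gT}) :
  abelian [set: gT] ->
  P0_automorphism f ->
  is_pullback f g ->
  f H = g @: H.
Proof.
move=> _ [f0 finj _ f1 fM] [g1 gp]; rewrite set1gE in f1.
have P0H : inP0 H by rewrite /inP0 group1.
have P0p : forall a : gT, inP0 [set 1; a] by move=> a; rewrite /inP0 set21.
have fHH : f H * f H = f H by rewrite -fM // mulGid.
have absorb : forall (K : {set gT}) y, K * K = K -> y \in K -> 1 \in K ->
    [set 1; y] * K = K.
  move=> K y KK yK oK; apply/eqP; rewrite eqEsubset; apply/andP; split.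
    rewrite -{2}KK; apply: mulSg; apply/subsetP=> z; rewrite !inE.
    by case/orP=> /eqP->.
  apply/subsetP=> z zK; rewrite -(mul1g z); apply: mem_mulg => //.
  by rewrite set21.
have gne1 : forall a, a != 1 -> g a != 1.
  move=> a a1; apply/eqP=> ga1; move: (gp a a1); rewrite ga1 setUid => e.
  have P01 : inP0 [set (1:gT)] by rewrite /inP0 set11.
  have e2 := finj _ _ (P0p a) P01 (etrans e (esym f1)).
  by move: a1; have := set22 1 a; rewrite e2 inE => ->.
have ginj : injective g.
  move=> a b.
  case: (eqVneq a 1) => [->|a1]; case: (eqVneq b 1) => [->|b1] //.
  - by rewrite g1 => /esym /eqP; rewrite (negPf (gne1 _ b1)).
  - by rewrite g1 => /eqP; rewrite (negPf (gne1 _ a1)).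
  move=> e; move: (gp a a1) (gp b b1); rewrite e => ea eb.
  have := finj _ _ (P0p a) (P0p b) (etrans ea (esym eb)) => e2.
  have := set22 1 a; rewrite e2 !inE => /orP[/eqP a1'|/eqP //].
  by move: a1; rewrite a1' eqxx.
have P0fH : 1 \in f H by exact: f0.
apply/eqP; rewrite eqEsubset; apply/andP; split; apply/subsetP=> y.
  move=> yH.
  have [a _ Ey] : exists2 a, true & y = g a.
    have := @inj_card_onto _ _ g ginj (leqnn _) y; rewrite codomE.
    by case/mapP=> a _ ->; exists a.
  rewrite Ey; case: (eqVneq a 1) => [->|a1]; first by rewrite imset_f ?group1.
  apply: imset_f.
  have e : f ([set 1; a] * H) = f H.
    by rewrite fM // gp // -Ey absorb.
  have P0aH : inP0 ([set 1; a] * H).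
    by rewrite /inP0; have := mem_mulg (set21 1 a) (group1 H); rewrite mulg1.
  have := finj _ _ P0aH P0H e => e2.
  by rewrite -e2; have := mem_mulg (set22 1 a) (group1 H); rewrite mulg1.
case/imsetP=> x xH ->.
case: (eqVneq x 1) => [->|x1]; first by rewrite g1.
have : f H = [set 1; g x] * f H.
  rewrite -gp // -fM //; congr f.
  by rewrite absorb // ?mulGid ?group1.
by move=> ->; have := mem_mulg (set22 1 (g x)) P0fH; rewrite mulg1.
Qed.
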